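(* Let $T$ be a triangle and $\bm{p}_2\in\mathcal{P}_2(T)^2$. Then $\bm{p}_2-\Pi_h^1\bm{p}_2=\nabla^\perp w$, where for every $\beta\in\{1,2,3\}$ $$w=\Big(\sum_{i,j,l=1}^2\alpha^i_{jl,\beta}\mathcal{D}^{jl}_{i,\beta}(\bm{p}_2)\Big)\psi_0+\sum_{k=1}^3\frac{\ell_k^3}{12}\mathcal{D}^{11}_{2,k}(\bm{p}_2)\psi_k.$$
   Context: $T$ has vertices $\bm{z}_1,\bm{z}_2,\bm{z}_3$ counterclockwise with barycentric coordinates $\lambda_1,\lambda_2,\lambda_3$, indices mod 3; $e_k$ is the edge opposite $\bm{z}_k$, $\ell_k$ its length, $\bm{t}_k$ the unit tangent oriented counterclockwise, $\bm{n}_k$ the unit outward normal; $d$ the diameter of the circumscribed circle. $\nabla^\perp v=(-\partial_{x_2}v,\partial_{x_1}v)^\intercal$. $\Pi_h^1\bm{q}\in\mathcal{RT}_1(T)=\{(v_1,v_2)^\intercal+v_3(x_1,x_2)^\intercal:v_i\in\mathcal{P}_1(T)\}$ with $\int_e(\bm{q}-\Pi_h^1\bm{q})\cdot\bm{n}_ev=0$ for all $v\in\mathcal{P}_1(e)$ on each edge and $\int_T(\bm{q}-\Pi_h^1\bm{q})=\bm{0}$. Bubbles: $\psi_0=\lambda_1\lambda_2\lambda_3$, $\psi_k=\lambda_{k-1}\lambda_{k+1}(\lambda_{k-1}-\lambda_{k+1})$, $k=1,2,3$. Operators: $\mathcal{D}_{1,k}^{11}\bm{q}=\bm{t}_k\cdot\partial_{\bm{t}_k}^2\bm{q}$,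 $\mathcal{D}_{1,k}^{12}\bm{q}=\mathcal{D}_{1,k}^{21}\bm{q}=\bm{t}_k\cdot\partial_{\bm{t}_k}\partial_{\bm{n}_k}\bm{q}$, $\mathcal{D}_{1,k}^{22}\bm{q}=\bm{t}_k\cdot\partial_{\bm{n}_k}^2\bm{q}$, and $\mathcal{D}_{2,k}^{jl}$ the same with $\bm{n}_k\cdot$ in place of $\bm{t}_k\cdot$. Coefficients: $\alpha^1_{11,k}=\frac{\ell_{k-1}\ell_{k+1}(3\ell_k^4-(\ell_{k-1}^2-\ell_{k+1}^2)^2)}{24d\ell_k^2}$; $\alpha^1_{12,k}=\alpha^1_{21,k}=\frac{\ell_{k-1}^2\ell_{k+1}^2(\ell_{k-1}^2-\ell_{k+1}^2)}{12d^2\ell_k}$; $\alpha^1_{22,k}=-\frac{\ell_{k+1}^3\ell_{k-1}^3}{6d^3}$; $\alpha^2_{11,k}=\frac{(\ell_{k-1}^2-\ell_{k+1}^2)(9\ell_k^4-(\ell_{k-1}^2-\ell_{k+1}^2)^2)}{48\ell_k^3}$; $\alpha^2_{12,k}=\alpha^2_{21,k}=-\alpha^1_{11,k}$; $\alpha^2_{22,k}=-\alpha^1_{12,k}$. *)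

(* Defs.v *)
From Stdlib Require Import Reals Lra Arith.
From Coquelicot Require Import Coquelicot.
Open Scope R_scope.

Definition pt := (R * R)%type.

Definition vadd (a b : pt) : pt := (fst a + fst b, snd a + snd b).
Definition vsub (a b : pt) : pt := (fst a - fst b, snd a - snd b).
Definition vscal (s : R) (a : pt) : pt := (s * fst a, s * snd a).
Definition dot (a b : pt) : R := fst a * fst b + snd a * snd b.
Definition cross (a b : pt) : R := fst a * snd b - snd a * fst b.
Definition vnorm (a : pt) : R := sqrt (dot a a).

Section Tri.
Variables z1 z2 z3 : pt.

(* vertex z_k, indices taken mod 3 (k = 1,2,3; k+1, k+2 = k-1 mod 3) *)
Definition vtx (k : nat) : pt :=
  match (k mod 3)%nat with 1%nat => z1 | 2%nat => z2 | _ => z3 end.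

(* twice the signed area; positive iff z1,z2,z3 counterclockwise *)
Definition area2 : R := cross (vsub z2 z1) (vsub z3 z1).

(* edge e_k is opposite z_k, from z_{k+1} to z_{k-1} (= z_{k+2}) *)
Definition elen (k : nat) : R := vnorm (vsub (vtx (k + 2)) (vtx (k + 1))).
Definition etan (k : nat) : pt := vscal (/ elen k) (vsub (vtx (k + 2)) (vtx (k + 1))).
(* outward unit normal (for a counterclockwise triangle) *)
Definition enrm (k : nat) : pt := (snd (etan k), - fst (etan k)).

Definition lam (k : nat) (x : pt) : R :=
  cross (vsub (vtx (k + 1)) x) (vsub (vtx (k + 2)) x) / area2.

Definition psi0 (x : pt) : R := lam 1 x * lam 2 x * lam 3 x.
Definition psi (k : nat) (x : pt) : R :=
  lam (k + 2) x * lam (k + 1) x * (lam (k + 2) x - lam (k + 1) x).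

Definition in_tri (x : pt) : Prop :=
  exists a b c : R, 0 <= a /\ 0 <= b /\ 0 <= c /\ a + b + c = 1 /\
    x = vadd (vscal a z1) (vadd (vscal b z2) (vscal c z3)).

Definition edge_int (k : nat) (f : pt -> R) : R :=
  elen k * RInt (fun s => f (vadd (vtx (k + 1)) (vscal s (vsub (vtx (k + 2)) (vtx (k + 1)))))) 0 1.

(* integral over T, through the affine parametrisation of T by the reference
   triangle (Jacobian = area2 = 2|T|) *)
Definition tri_int (f : pt -> R) : R :=
  area2 * RInt (fun s => RInt (fun t =>
     f (vadd z1 (vadd (vscal s (vsub z2 z1)) (vscal t (vsub z3 z1))))) 0 (1 - s)) 0 1.
End Tri.

Definition is_P1 (v : pt -> R) : Prop :=
  exists a b c : R, forall x, v x = a + b * fst x + c * snd x.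
Definition is_P2 (v : pt -> R) : Prop :=
  exists a b c e f g : R, forall x,
    v x = a + b * fst x + c * snd x + e * fst x ^ 2 + f * fst x * snd x + g * snd x ^ 2.
Definition is_P2vec (q : pt -> pt) : Prop :=
  is_P2 (fun x => fst (q x)) /\ is_P2 (fun x => snd (q x)).

Definition in_RT1 (r : pt -> pt) : Prop :=
  exists v1 v2 v3 : pt -> R, is_P1 v1 /\ is_P1 v2 /\ is_P1 v3 /\
    forall x, r x = (v1 x + v3 x * fst x, v2 x + v3 x * snd x).

(* r = Pi_h^1 q : defining conditions of the RT_1 interpolant *)
Definition is_Pi1 (z1 z2 z3 : pt) (q r : pt -> pt) : Prop :=
  in_RT1 r /\
  (forall k : nat, (1 <= k <= 3)%nat -> forall v : pt -> R, is_P1 v ->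
     edge_int z1 z2 z3 k (fun x => dot (vsub (q x) (r x)) (enrm z1 z2 z3 k) * v x) = 0) /\
  tri_int z1 z2 z3 (fun x => fst (q x) - fst (r x)) = 0 /\
  tri_int z1 z2 z3 (fun x => snd (q x) - snd (r x)) = 0.

(* second directional derivative  d_a d_b f, evaluated at the origin
   (for the quadratic fields considered here it is a constant) *)
Definition dder2 (f : pt -> R) (a b : pt) : R :=
  Derive (fun s => Derive (fun u =>
     f (vadd (vscal u b) (vscal s a))) 0) 0.

Definition Dop (u a b : pt) (q : pt -> pt) : R :=
  fst u * dder2 (fun x => fst (q x)) a b + snd u * dder2 (fun x => snd (q x)) a b.

(* D^{jl}_{i,k}: i=1 -> t_k . , i=2 -> n_k . ; j,l = 1 -> t_k, 2 -> n_k *)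
Definition tn (z1 z2 z3 : pt) (i k : nat) : pt :=
  if Nat.eqb i 1 then etan z1 z2 z3 k else enrm z1 z2 z3 k.
Definition Dcal (z1 z2 z3 : pt) (i j l k : nat) (q : pt -> pt) : R :=
  Dop (tn z1 z2 z3 i k) (tn z1 z2 z3 j k) (tn z1 z2 z3 l k) q.

(* coefficients alpha^i_{jl,k}; d = diameter of circumscribed circle *)
Definition alpha (z1 z2 z3 : pt) (d : R) (i j l k : nat) : R :=
  let lk := elen z1 z2 z3 k in
  let lm := elen z1 z2 z3 (k + 2) in  (* l_{k-1} *)
  let lp := elen z1 z2 z3 (k + 1) in
  let a111 := lm * lp * (3 * lk ^ 4 - (lm ^ 2 - lp ^ 2) ^ 2) / (24 * d * lk ^ 2) in
  let a112 := lm ^ 2 * lp ^ 2 * (lm ^ 2 - lp ^ 2) / (12 * d ^ 2 * lk) in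
  let a122 := - (lp ^ 3 * lm ^ 3 / (6 * d ^ 3)) in
  let a211 := (lm ^ 2 - lp ^ 2) * (9 * lk ^ 4 - (lm ^ 2 - lp ^ 2) ^ 2) / (48 * lk ^ 3) in
  match i, j, l with
  | 1, 1, 1 => a111
  | 1, 1, 2 | 1, 2, 1 => a112
  | 1, 2, 2 => a122
  | 2, 1, 1 => a211
  | 2, 1, 2 | 2, 2, 1 => - a111
  | _, _, _ => - a112
  end%nat.

Definition sum12 (f : nat -> R) : R := f 1%nat + f 2%nat.
Definition sum123 (f : nat -> R) : R := f 1%nat + f 2%nat + f 3%nat.

Definition wfun (z1 z2 z3 : pt) (d : R) (q : pt -> pt) (beta : nat) (x : pt) : R :=
  sum12 (fun i => sum12 (fun j => sum12 (fun l =>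
     alpha z1 z2 z3 d i j l beta * Dcal z1 z2 z3 i j l beta q))) * psi0 z1 z2 z3 x
  + sum123 (fun k => elen z1 z2 z3 k ^ 3 / 12 * Dcal z1 z2 z3 2 1 1 k q * psi z1 z2 z3 k x).

Definition gradperp (w : pt -> R) (x : pt) : pt :=
  (- Derive (fun s => w (fst x, s)) (snd x), Derive (fun s => w (s, snd x)) (fst x)).

(* Main.v *)
Require Import Defs.
From Stdlib Require Import Reals Lra Lia.
From Coquelicot Require Import Coquelicot.
Open Scope R_scope.

Definition cubic (f : R -> R) := exists a b c d, forall s, f s = a + b*s + c*s^2 + d*s^3.
Lemma RInt_cubic f : cubic f -> RInt f 0 1 = (f 0 + 4 * f (1/2) + f 1)/6.
Proof.
intros [a [b [c [d H]]]].
rewrite (RInt_ext f (fun s => a + b*s + c*s^2 + d*s^3)) by (intros; apply H).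
rewrite !H.
apply is_RInt_unique.
set (F := fun s => a*s + b*s^2/2 + c*s^3/3 + d*s^4/4).
replace ((a + b * 0 + c * 0 ^ 2 + d * 0 ^ 3 + 4 * (a + b * (1 / 2) + c * (1 / 2) ^ 2 + d * (1 / 2) ^ 3) +
  (a + b * 1 + c * 1 ^ 2 + d * 1 ^ 3)) / 6) with (minus (F 1) (F 0)) by (unfold minus, plus, opp, F; simpl; field).
apply (@is_RInt_derive R_CompleteNormedModule F); intros.
- unfold F; auto_derive; auto; simpl; field.
- apply (@ex_derive_continuous R_AbsRing R_NormedModule); auto_derive; auto.
Qed.
Lemma RInt_quad0 (a b c h : R) : RInt (fun t => a + b*t + c*t^2) 0 h = a*h + b*h^2/2 + c*h^3/3.
Proof.
apply is_RInt_unique.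
set (F := fun s => a*s + b*s^2/2 + c*s^3/3).
replace (a*h + b*h^2/2 + c*h^3/3) with (minus (F h) (F 0)) by (unfold minus, plus, opp, F; simpl; field).
apply (@is_RInt_derive R_CompleteNormedModule F); intros.
- unfold F; auto_derive; auto; simpl; field.
- apply (@ex_derive_continuous R_AbsRing R_NormedModule); auto_derive; auto.
Qed.

Definition seg (A B : pt) (s : R) : pt := vadd A (vscal s (vsub B A)).
Definition simp (A B : pt) (F : pt -> R) : R :=
  F (seg A B 0) + 4 * F (seg A B (1/2)) + F (seg A B 1).

Lemma cubic_seg (f v : pt -> R) A B : is_P2 f -> is_P1 v ->
  cubic (fun s => f (seg A B s) * v (seg A B s)).
Proof.
intros [a [b [c [e [f' [g Hf]]]]]] [a' [b' [c' Hv]]].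
destruct A as [A1 A2], B as [B1 B2].
set (E1 := B1 - A1). set (E2 := B2 - A2).
set (al := a + b*A1 + c*A2 + e*A1^2 + f'*A1*A2 + g*A2^2).
set (be := b*E1 + c*E2 + 2*e*A1*E1 + f'*(A1*E2 + A2*E1) + 2*g*A2*E2).
set (ga := e*E1^2 + f'*E1*E2 + g*E2^2).
set (mu := a' + b'*A1 + c'*A2). set (nu := b'*E1 + c'*E2).
exists (al*mu), (al*nu + be*mu), (be*nu + ga*mu), (ga*nu).
intros s; rewrite Hf, Hv; unfold seg, vadd, vscal, vsub; simpl.
unfold al, be, ga, mu, nu, E1, E2; ring.
Qed.

Lemma edge_quad z1 z2 z3 k (f v : pt -> R) : is_P2 f -> is_P1 v ->
  edge_int z1 z2 z3 k (fun x => f x * v x) =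
  elen z1 z2 z3 k * simp (vtx z1 z2 z3 (k+1)) (vtx z1 z2 z3 (k+2)) (fun x => f x * v x) / 6.
Proof.
intros Hf Hv. unfold edge_int.
change (fun s => f (vadd (vtx z1 z2 z3 (k + 1)) (vscal s (vsub (vtx z1 z2 z3 (k + 2)) (vtx z1 z2 z3 (k + 1))))) *
  v (vadd (vtx z1 z2 z3 (k + 1)) (vscal s (vsub (vtx z1 z2 z3 (k + 2)) (vtx z1 z2 z3 (k + 1))))))
 with (fun s => f (seg (vtx z1 z2 z3 (k+1)) (vtx z1 z2 z3 (k+2)) s) *
   v (seg (vtx z1 z2 z3 (k+1)) (vtx z1 z2 z3 (k+2)) s)).
rewrite (RInt_cubic (fun s => f (seg (vtx z1 z2 z3 (k+1)) (vtx z1 z2 z3 (k+2)) s) *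
   v (seg (vtx z1 z2 z3 (k+1)) (vtx z1 z2 z3 (k+2)) s))).
- unfold simp; field.
- apply cubic_seg; auto.
Qed.

Definition tp (z1 z2 z3 : pt) (s t : R) : pt := vadd z1 (vadd (vscal s (vsub z2 z1)) (vscal t (vsub z3 z1))).
Definition midsum z1 z2 z3 (F : pt -> R) : R :=
  F (tp z1 z2 z3 (1/2) 0) + F (tp z1 z2 z3 (1/2) (1/2)) + F (tp z1 z2 z3 0 (1/2)).

Lemma tri_quad z1 z2 z3 (f : pt -> R) : is_P2 f ->
  tri_int z1 z2 z3 f = area2 z1 z2 z3 * midsum z1 z2 z3 f / 6.
Proof.
intros [a [b [c [e [f' [g Hf]]]]]].
destruct z1 as [P1 P2], z2 as [Q1 Q2], z3 as [R1 R2].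
set (U1 := Q1 - P1). set (U2 := Q2 - P2). set (V1 := R1 - P1). set (V2 := R2 - P2).
set (c00 := a + b*P1 + c*P2 + e*P1^2 + f'*P1*P2 + g*P2^2).
set (c10 := b*U1 + c*U2 + 2*e*P1*U1 + f'*(P1*U2 + P2*U1) + 2*g*P2*U2).
set (c01 := b*V1 + c*V2 + 2*e*P1*V1 + f'*(P1*V2 + P2*V1) + 2*g*P2*V2).
set (c20 := e*U1^2 + f'*U1*U2 + g*U2^2).
set (c02 := e*V1^2 + f'*V1*V2 + g*V2^2).
set (c11 := 2*e*U1*V1 + f'*(U1*V2 + U2*V1) + 2*g*U2*V2).
assert (Hp : forall s t, f (tp (P1,P2) (Q1,Q2) (R1,R2) s t) =
   c00 + c10*s + c01*t + c20*s^2 + c11*s*t + c02*t^2).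
{ intros s t; rewrite Hf; unfold tp, vadd, vscal, vsub; simpl.
  unfold c00, c10, c01, c20, c02, c11, U1, U2, V1, V2; ring. }
unfold tri_int, midsum.
rewrite (RInt_ext _ (fun s => (c00 + c10*s + c20*s^2)*(1-s) + (c01 + c11*s)*(1-s)^2/2 + c02*(1-s)^3/3)).
2:{ intros s _.
  rewrite (RInt_ext _ (fun t => (c00 + c10*s + c20*s^2) + (c01 + c11*s)*t + c02*t^2)).
  - apply RInt_quad0.
  - intros t _. change (vadd (P1, P2) (vadd (vscal s (vsub (Q1, Q2) (P1, P2))) (vscal t (vsub (R1, R2) (P1, P2)))))
      with (tp (P1,P2) (Q1,Q2) (R1,R2) s t). rewrite Hp. change (c00 + c10 * s + c01 * t + c20 * s ^ 2 + c11 * s * t + c02 * t ^ 2 = c00 + c10 * s + c20 * s ^ 2 + (c01 + c11 * s) * t + c02 * t ^ 2)%R. ring. }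
rewrite RInt_cubic.
- rewrite !Hp. field.
- exists (c00 + c01/2 + c02/3), (c10 - c00 + (c11 - 2*c01)/2 - c02),
    (c20 - c10 + (c01 - 2*c11)/2 + c02), (-c20 + c11/2 - c02/3).
  intros s; field.
Qed.

Definition rot (e : pt) : pt := (snd e, - fst e).
Definition sq (e : pt) := fst e * fst e + snd e * snd e.
Definition kdot (k x : pt) := fst k * fst x + snd k * snd x.
Definition rtform (a1 b1 c1 a2 b2 c2 k1 k2 : R) (x : pt) : pt :=
  (a1 + b1*fst x + c1*snd x + (k1*fst x + k2*snd x)*fst x,
   a2 + b2*fst x + c2*snd x + (k1*fst x + k2*snd x)*snd x).

Lemma vec_zero (p a b : pt) : dot p (rot a) = 0 -> dot p (rot b) = 0 -> cross a b <> 0 -> p = (0,0).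
Proof.
destruct p as [p1 p2], a as [a1 a2], b as [b1 b2]; unfold dot, rot, cross; simpl; intros H1 H2 H3.
assert (E1 : p1 * (a1*b2 - a2*b1) = a1*(p1*b2 + p2*(-b1)) - b1*(p1*a2 + p2*(-a1))) by ring.
assert (E2 : p2 * (a1*b2 - a2*b1) = a2*(p1*b2 + p2*(-b1)) - b2*(p1*a2 + p2*(-a1))) by ring.
rewrite H1, H2 in E1, E2.
assert (F1 : p1 * (a1*b2 - a2*b1) = 0) by (rewrite E1; ring).
assert (F2 : p2 * (a1*b2 - a2*b1) = 0) by (rewrite E2; ring).
f_equal.
- destruct (Rmult_integral _ _ F1); [auto | contradiction].
- destruct (Rmult_integral _ _ F2); [auto | contradiction].
Qed.

Lemma P1_one : is_P1 (fun _ => 1).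
Proof. exists 1, 0, 0; intros; ring. Qed.

Lemma lin2 c NA NB NM E1 E2 : E1 = c*(NA + 4*NM + NB) -> E2 = c*(NA + 2*NM) ->
  NM = (NA+NB)/2 -> E1 = 0 -> E2 = 0 -> c<>0 -> NA = 0 /\ NB = 0.
Proof.
intros H1 H2 H3 H4 H5 Hc. subst.
assert (X : c * NA = 0 /\ c * NB = 0) by (split; nra).
destruct X as [X Y]. split.
- destruct (Rmult_integral _ _ X); [contradiction|auto].
- destruct (Rmult_integral _ _ Y); [contradiction|auto].
Qed.

Lemma edge_zero (A B : pt) (c : R) (q : pt -> pt) a1 b1 c1 a2 b2 c2 k1 k2 :
  (forall x, q x = rtform a1 b1 c1 a2 b2 c2 k1 k2 x) -> c <> 0 -> sq (vsub A B) <> 0 ->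
  (forall v, is_P1 v -> simp A B (fun x => dot (q x) (c * snd (vsub B A), - (c * fst (vsub B A))) * v x) = 0) ->
  dot (q A) (rot (vsub B A)) = 0 /\ dot (q B) (rot (vsub B A)) = 0.
Proof.
intros Hq Hc Hs Hv.
pose proof (Hv _ P1_one) as E1.
assert (Hp : is_P1 (fun x => dot (vsub x B) (vsub A B) / sq (vsub A B))).
{ exists ((- fst B * fst (vsub A B) - snd B * snd (vsub A B)) / sq (vsub A B)),
    (fst (vsub A B) / sq (vsub A B)), (snd (vsub A B) / sq (vsub A B)).
  intros x; unfold dot, vsub; simpl; field; auto. }
pose proof (Hv _ Hp) as E2.
match type of E1 with ?L1 = _ => match type of E2 with ?L2 = _ =>
 apply (lin2 c _ _ (dot (q (seg A B (1/2))) (rot (vsub B A))) L1 L2) end end; auto.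
- unfold simp, seg. rewrite !Hq.
  destruct A as [A1 A2], B as [B1 B2].
  unfold rtform, dot, rot, vsub, vadd, vscal, sq in *; simpl in *. field.
- unfold simp, seg. rewrite !Hq.
  destruct A as [A1 A2], B as [B1 B2].
  unfold rtform, dot, rot, vsub, vadd, vscal, sq in *; simpl in *. field. auto.
- unfold seg. rewrite !Hq.
  destruct A as [A1 A2], B as [B1 B2].
  unfold rtform, dot, rot, vsub, vadd, vscal, sq in *; simpl in *. field.
Qed.

Lemma sq_pos (A B C : pt) : cross (vsub B A) (vsub C A) <> 0 -> 0 < sq (vsub A B).
Proof.
destruct A as [a1 a2], B as [b1 b2], C as [c1 c2]; unfold cross, sq, vsub; simpl; intros H.
destruct (Req_dec a1 b1) as [E1|E1]; destruct (Req_dec a2 b2) as [E2|E2].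
- subst. exfalso; apply H; ring.
- assert (0 < (a2 - b2)*(a2-b2)) by (apply Rsqr_pos_lt; intro; apply E2; lra). nra.
- assert (0 < (a1 - b1)*(a1-b1)) by (apply Rsqr_pos_lt; intro; apply E1; lra). nra.
- assert (0 < (a2 - b2)*(a2-b2)) by (apply Rsqr_pos_lt; intro; apply E2; lra). nra.
Qed.

Lemma edges_pos z1 z2 z3 : 0 < area2 z1 z2 z3 ->
  0 < sq (vsub z2 z3) /\ 0 < sq (vsub z3 z1) /\ 0 < sq (vsub z1 z2).
Proof.
intros H. unfold area2 in H. repeat split.
- apply (sq_pos z2 z3 z1). destruct z1, z2, z3; unfold cross, vsub in *; simpl in *. lra.
- apply (sq_pos z3 z1 z2). destruct z1, z2, z3; unfold cross, vsub in *; simpl in *. lra.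
- apply (sq_pos z1 z2 z3). lra.
Qed.

Lemma elen_pos z1 z2 z3 k : 0 < area2 z1 z2 z3 -> (1 <= k <= 3)%nat -> 0 < elen z1 z2 z3 k.
Proof.
intros H Hk. destruct (edges_pos _ _ _ H) as [H1 [H2 H3]].
unfold elen, vnorm. apply sqrt_lt_R0.
assert (Hk3 : (k = 1 \/ k = 2 \/ k = 3)%nat) by lia; destruct Hk3 as [ -> | [ -> | -> ]]; unfold vtx; simpl;
 unfold sq, vsub, dot in *; simpl in *; nra.
Qed.

Lemma sumsq3 a b c : a*a + b*b + c*c = 0 -> a = 0 /\ b = 0 /\ c = 0.
Proof. intros; repeat split; nra. Qed.

Lemma unisolve z1 z2 z3 (q : pt -> pt) a1 b1 c1 a2 b2 c2 k1 k2 :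
  0 < area2 z1 z2 z3 ->
  (forall x, q x = rtform a1 b1 c1 a2 b2 c2 k1 k2 x) ->
  (forall k, (1 <= k <= 3)%nat -> forall v, is_P1 v ->
     simp (vtx z1 z2 z3 (k+1)) (vtx z1 z2 z3 (k+2)) (fun x => dot (q x) (enrm z1 z2 z3 k) * v x) = 0) ->
  midsum z1 z2 z3 (fun x => fst (q x)) = 0 -> midsum z1 z2 z3 (fun x => snd (q x)) = 0 ->
  forall x, q x = (0,0).
Proof.
intros HA Hq HE HM1 HM2.
destruct (edges_pos _ _ _ HA) as [S1 [S2 S3]].
assert (Ez : forall k, (1 <= k <= 3)%nat ->
   dot (q (vtx z1 z2 z3 (k+1))) (rot (vsub (vtx z1 z2 z3 (k+2)) (vtx z1 z2 z3 (k+1)))) = 0 /\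
   dot (q (vtx z1 z2 z3 (k+2))) (rot (vsub (vtx z1 z2 z3 (k+2)) (vtx z1 z2 z3 (k+1)))) = 0).
{ intros k Hk. apply (edge_zero _ _ (/ elen z1 z2 z3 k) q a1 b1 c1 a2 b2 c2 k1 k2 Hq).
  - apply Rinv_neq_0_compat. apply Rgt_not_eq. apply elen_pos; auto.
  - assert (Hk3 : (k = 1 \/ k = 2 \/ k = 3)%nat) by lia; destruct Hk3 as [ -> | [ -> | -> ]]; unfold vtx; simpl;
    unfold sq, vsub in *; simpl in *; nra.
  - intros v Hv. apply (HE k Hk v Hv). }
destruct (Ez 1%nat ltac:(lia)) as [E1a E1b].
destruct (Ez 2%nat ltac:(lia)) as [E2a E2b].
destruct (Ez 3%nat ltac:(lia)) as [E3a E3b].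
change (vtx z1 z2 z3 (1+1)) with z2 in *. change (vtx z1 z2 z3 (1+2)) with z3 in *.
change (vtx z1 z2 z3 (2+1)) with z3 in *. change (vtx z1 z2 z3 (2+2)) with z1 in *.
change (vtx z1 z2 z3 (3+1)) with z1 in *. change (vtx z1 z2 z3 (3+2)) with z2 in *.
assert (V1 : q z1 = (0,0)).
{ apply (vec_zero _ _ _ E2b E3a). unfold area2 in HA. destruct z1, z2, z3; unfold cross, vsub in *; simpl in *. lra. }
assert (V2 : q z2 = (0,0)).
{ apply (vec_zero _ _ _ E3b E1a). unfold area2 in HA. destruct z1, z2, z3; unfold cross, vsub in *; simpl in *. lra. }
assert (V3 : q z3 = (0,0)).
{ apply (vec_zero _ _ _ E1b E2a). unfold area2 in HA. destruct z1, z2, z3; unfold cross, vsub in *; simpl in *. lra. }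
clear Ez E1a E1b E2a E2b E3a E3b HE.
unfold midsum in HM1, HM2. repeat rewrite Hq in HM1. repeat rewrite Hq in HM2. rewrite Hq in V1, V2, V3.
destruct z1 as [x1 y1], z2 as [x2 y2], z3 as [x3 y3].
unfold rtform, tp, vadd, vscal, vsub, area2, cross, sq in *; simpl in *.
injection V1; injection V2; injection V3; intros W1 W2 W3 W4 W5 W6.
set (u1 := x2 - x1) in *. set (u2 := y2 - y1) in *. set (v1 := x3 - x1) in *. set (v2 := y3 - y1) in *.
assert (K : (k1*u1 + k2*u2)*(k1*u1+k2*u2) + (k1*v1+k2*v2)*(k1*v1+k2*v2)
   + (k1*(v1-u1)+k2*(v2-u2))*(k1*(v1-u1)+k2*(v2-u2)) = 0).
{ match type of HM1 with ?L1 = _ => match type of HM2 with ?L2 = _ =>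
  transitivity (-4*(k1*L1 + k2*L2) + 4*k1*(a1 + b1 * x1 + c1 * y1 + (k1 * x1 + k2 * y1) * x1 + (a1 + b1 * x2 + c1 * y2 + (k1 * x2 + k2 * y2) * x2) + (a1 + b1 * x3 + c1 * y3 + (k1 * x3 + k2 * y3) * x3))
       + 4*k2*(a2 + b2 * x1 + c2 * y1 + (k1 * x1 + k2 * y1) * y1 + (a2 + b2 * x2 + c2 * y2 + (k1 * x2 + k2 * y2) * y2) + (a2 + b2 * x3 + c2 * y3 + (k1 * x3 + k2 * y3) * y3)));
  [unfold u1, u2, v1, v2; field | rewrite HM1, HM2, W1, W2, W3, W4, W5, W6; ring] end end. }
apply sumsq3 in K. destruct K as [Ku [Kv _]].
assert (Hk1 : k1 * (u1*v2 - u2*v1) = 0) by (transitivity (v2*(k1*u1+k2*u2) - u2*(k1*v1+k2*v2)); [ring | rewrite Ku, Kv; ring]).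
assert (Hk2 : k2 * (u1*v2 - u2*v1) = 0) by (transitivity (u1*(k1*v1+k2*v2) - v1*(k1*u1+k2*u2)); [ring | rewrite Ku, Kv; ring]).
assert (HA2 : u1*v2 - u2*v1 <> 0) by lra.
apply Rmult_integral in Hk1. apply Rmult_integral in Hk2.
destruct Hk1 as [Hk1|Hk1]; [|contradiction]. destruct Hk2 as [Hk2|Hk2]; [|contradiction].
subst k1 k2.
intros [X Y]. rewrite Hq. unfold rtform; simpl.
set (D := u1*v2 - u2*v1) in *.
assert (F1 : (a1 + b1*X + c1*Y) * D = 0).
{ transitivity (((x2-X)*(y3-Y) - (y2-Y)*(x3-X)) * (a1 + b1 * x1 + c1 * y1 + (0 * x1 + 0 * y1) * x1)
   + ((x3-X)*(y1-Y) - (y3-Y)*(x1-X)) * (a1 + b1 * x2 + c1 * y2 + (0 * x2 + 0 * y2) * x2)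
   + ((x1-X)*(y2-Y) - (y1-Y)*(x2-X)) * (a1 + b1 * x3 + c1 * y3 + (0 * x3 + 0 * y3) * x3)).
  - unfold D, u1, u2, v1, v2; ring.
  - rewrite W2, W4, W6; ring. }
assert (F2 : (a2 + b2*X + c2*Y) * D = 0).
{ transitivity (((x2-X)*(y3-Y) - (y2-Y)*(x3-X)) * (a2 + b2 * x1 + c2 * y1 + (0 * x1 + 0 * y1) * y1)
   + ((x3-X)*(y1-Y) - (y3-Y)*(x1-X)) * (a2 + b2 * x2 + c2 * y2 + (0 * x2 + 0 * y2) * y2)
   + ((x1-X)*(y2-Y) - (y1-Y)*(x2-X)) * (a2 + b2 * x3 + c2 * y3 + (0 * x3 + 0 * y3) * y3)).
  - unfold D, u1, u2, v1, v2; ring.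
  - rewrite W1, W3, W5; ring. }
apply Rmult_integral in F1; apply Rmult_integral in F2.
destruct F1 as [F1|F1]; [|contradiction]. destruct F2 as [F2|F2]; [|contradiction].
f_equal; lra.
Qed.

Definition aff (a : R) (g : pt) (x : pt) : R := a + fst g * fst x + snd g * snd x.
Definition glam (A B : pt) (a2 : R) : pt := ((snd A - snd B)/a2, (fst B - fst A)/a2).
Definition Wg (l1 l2 l3 : R) (g1 g2 g3 : pt) (K0 K1 K2 K3 : R) (x : pt) : R :=
  let A1 := aff l1 g1 x in let A2 := aff l2 g2 x in let A3 := aff l3 g3 x in
  K0*(A1*A2*A3) + K1*(A3*A2*(A3-A2)) + K2*(A1*A3*(A1-A3)) + K3*(A2*A1*(A2-A1)).
Definition Gfun (l1 l2 l3:R) (g1 g2 g3: pt) (K0 K1 K2 K3: R) (x: pt) : pt :=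
 let A1 := aff l1 g1 x in let A2 := aff l2 g2 x in let A3 := aff l3 g3 x in
 let D d1 d2 d3 := K0*(d1*A2*A3 + A1*d2*A3 + A1*A2*d3) + K1*(d3*A2*(A3-A2) + A3*d2*(A3-A2) + A3*A2*(d3-d2)) + K2*(d1*A3*(A1-A3) + A1*d3*(A1-A3) + A1*A3*(d1-d3)) + K3*(d2*A1*(A2-A1) + A2*d1*(A2-A1) + A2*A1*(d2-d1)) in
 (- D (snd g1) (snd g2) (snd g3), D (fst g1) (fst g2) (fst g3)).

Lemma gradperp_Wg l1 l2 l3 g1 g2 g3 K0 K1 K2 K3 x :
  gradperp (Wg l1 l2 l3 g1 g2 g3 K0 K1 K2 K3) x = Gfun l1 l2 l3 g1 g2 g3 K0 K1 K2 K3 x.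
Proof.
destruct x as [X Y]. unfold gradperp, Gfun; simpl. f_equal; [f_equal|];
apply is_derive_unique; unfold Wg, aff; simpl; auto_derive; auto; ring.
Qed.

Section Lam.
Variables z1 z2 z3 : pt.
Hypothesis HA : area2 z1 z2 z3 <> 0.
Let a2 := area2 z1 z2 z3.
Lemma lam_ab A B x : cross (vsub A x) (vsub B x) / a2 = aff (cross A B / a2) (glam A B a2) x.
Proof. unfold aff, glam, cross, vsub; simpl. field. auto. Qed.
Lemma lam1 x : lam z1 z2 z3 1 x = aff (cross z2 z3 / a2) (glam z2 z3 a2) x.
Proof. apply lam_ab. Qed.
Lemma lam2 x : lam z1 z2 z3 2 x = aff (cross z3 z1 / a2) (glam z3 z1 a2) x.
Proof. apply lam_ab. Qed.
Lemma lam3 x : lam z1 z2 z3 3 x = aff (cross z1 z2 / a2) (glam z1 z2 a2) x.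
Proof. apply lam_ab. Qed.
Lemma lam4 x : lam z1 z2 z3 4 x = aff (cross z2 z3 / a2) (glam z2 z3 a2) x.
Proof. apply lam_ab. Qed.
Lemma lam5 x : lam z1 z2 z3 5 x = aff (cross z3 z1 / a2) (glam z3 z1 a2) x.
Proof. apply lam_ab. Qed.
End Lam.

Definition hq (e f g : R) (a b : pt) := 2*e*fst a*fst b + f*(fst a*snd b + snd a*fst b) + 2*g*snd a*snd b.
Definition P2eq (f : pt -> R) (a b c e f' g : R) :=
  forall x, f x = a + b * fst x + c * snd x + e * fst x ^ 2 + f' * fst x * snd x + g * snd x ^ 2.

Lemma dder2_P2 f a b c e f' g u w : P2eq f a b c e f' g -> dder2 f u w = hq e f' g u w.
Proof.
intros Hf. unfold dder2.
rewrite (Derive_ext (fun s => Derive (fun t => f (vadd (vscal t w) (vscal s u))) 0)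
  (fun s => b*fst w + c*snd w + 2*e*s*fst u*fst w + f'*s*(fst u*snd w + snd u*fst w) + 2*g*s*snd u*snd w)).
- apply is_derive_unique. unfold hq. auto_derive; auto; ring.
- intros s. rewrite (Derive_ext _ (fun t => a + b * (t*fst w + s*fst u) + c * (t*snd w + s*snd u)
     + e * (t*fst w + s*fst u) ^ 2 + f' * (t*fst w + s*fst u) * (t*snd w + s*snd u) + g * (t*snd w + s*snd u) ^ 2)).
  + apply is_derive_unique. auto_derive; auto; ring.
  + intros t. rewrite Hf. unfold vadd, vscal; simpl. reflexivity.
Qed.

Lemma gradperp_ext f g x : (forall y, f y = g y) -> gradperp f x = gradperp g x.
Proof.
intros H. unfold gradperp. rewrite (Derive_ext (fun s => f (fst x, s)) (fun s => g (fst x, s))) by auto.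
rewrite (Derive_ext (fun s => f (s, snd x)) (fun s => g (s, snd x))) by auto. reflexivity.
Qed.

Lemma wfun_Wg z1 z2 z3 d p2 beta : area2 z1 z2 z3 <> 0 -> forall y,
  wfun z1 z2 z3 d p2 beta y =
  Wg (cross z2 z3 / area2 z1 z2 z3) (cross z3 z1 / area2 z1 z2 z3) (cross z1 z2 / area2 z1 z2 z3)
     (glam z2 z3 (area2 z1 z2 z3)) (glam z3 z1 (area2 z1 z2 z3)) (glam z1 z2 (area2 z1 z2 z3))
     (sum12 (fun i => sum12 (fun j => sum12 (fun l =>
        alpha z1 z2 z3 d i j l beta * Dcal z1 z2 z3 i j l beta p2))))
     (elen z1 z2 z3 1 ^ 3 / 12 * Dcal z1 z2 z3 2 1 1 1 p2)
     (elen z1 z2 z3 2 ^ 3 / 12 * Dcal z1 z2 z3 2 1 1 2 p2)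
     (elen z1 z2 z3 3 ^ 3 / 12 * Dcal z1 z2 z3 2 1 1 3 p2) y.
Proof.
intros HA y. unfold wfun, psi0, psi, sum123. cbn [Nat.add].
rewrite !lam1, !lam2, !lam3, !lam4, !lam5 by auto.
unfold Wg. ring.
Qed.

Lemma dot_nonneg a : 0 <= dot a a.
Proof. unfold dot. pose proof (Rle_0_sqr (fst a)). pose proof (Rle_0_sqr (snd a)). unfold Rsqr in *. lra. Qed.

Lemma elen_sq1 z1 z2 z3 : elen z1 z2 z3 1 ^ 2 = sq (vsub z3 z2).
Proof. unfold elen, vnorm. rewrite pow2_sqrt. reflexivity. apply dot_nonneg. Qed.
Lemma elen_sq2 z1 z2 z3 : elen z1 z2 z3 2 ^ 2 = sq (vsub z1 z3).
Proof. unfold elen, vnorm. rewrite pow2_sqrt. reflexivity. apply dot_nonneg. Qed.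
Lemma elen_sq3 z1 z2 z3 : elen z1 z2 z3 3 ^ 2 = sq (vsub z2 z1).
Proof. unfold elen, vnorm. rewrite pow2_sqrt. reflexivity. apply dot_nonneg. Qed.

Lemma d_eq z1 z2 z3 d : 0 < area2 z1 z2 z3 ->
  (exists c : pt, forall k : nat, (1 <= k <= 3)%nat -> vnorm (vsub (vtx z1 z2 z3 k) c) = d / 2) ->
  d = elen z1 z2 z3 1 * elen z1 z2 z3 2 * elen z1 z2 z3 3 / area2 z1 z2 z3.
Proof.
intros HA [c Hc].
pose proof (Hc 1%nat ltac:(lia)) as H1. pose proof (Hc 2%nat ltac:(lia)) as H2.
pose proof (Hc 3%nat ltac:(lia)) as H3.
change (vtx z1 z2 z3 1) with z1 in H1. change (vtx z1 z2 z3 2) with z2 in H2.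
change (vtx z1 z2 z3 3) with z3 in H3.
assert (Hd : 0 <= d).
{ assert (0 <= vnorm (vsub z1 c)) by (unfold vnorm; apply sqrt_pos). lra. }
assert (Q : forall z, vnorm (vsub z c) = d/2 -> dot (vsub z c) (vsub z c) = d^2/4).
{ intros z H. unfold vnorm in H. rewrite <- (sqrt_sqrt (dot (vsub z c) (vsub z c))).
  rewrite H. field. apply dot_nonneg. }
apply Q in H1. apply Q in H2. apply Q in H3. clear Q Hc.
pose proof (elen_sq1 z1 z2 z3) as E1. pose proof (elen_sq2 z1 z2 z3) as E2. pose proof (elen_sq3 z1 z2 z3) as E3.
assert (L1 : 0 <= elen z1 z2 z3 1) by (unfold elen, vnorm; apply sqrt_pos).
assert (L2 : 0 <= elen z1 z2 z3 2) by (unfold elen, vnorm; apply sqrt_pos).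
assert (L3 : 0 <= elen z1 z2 z3 3) by (unfold elen, vnorm; apply sqrt_pos).
revert E1 E2 E3 H1 H2 H3 L1 L2 L3.
generalize (elen z1 z2 z3 1) (elen z1 z2 z3 2) (elen z1 z2 z3 3). intros l1 l2 l3.
unfold area2 in *.
destruct z1 as [x1 y1], z2 as [x2 y2], z3 as [x3 y3], c as [c1 c2].
unfold sq, dot, vsub, cross in *; simpl in *.
intros E1 E2 E3 H1 H2 H3 L1 L2 L3.
set (A := (x2 - x1) * (y3 - y1) - (y2 - y1) * (x3 - x1)) in *.
set (m1 := x2*x2 + y2*y2 - x1*x1 - y1*y1). set (m2 := x3*x3 + y3*y3 - x1*x1 - y1*y1).
assert (C1 : c1 * A = ((y3 - y1)*m1 - (y2 - y1)*m2)/2).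
{ transitivity (((y3 - y1)*(m1 - ((x2 - c1) * (x2 - c1) + (y2 - c2) * (y2 - c2) - ((x1 - c1) * (x1 - c1) + (y1 - c2) * (y1 - c2))))
   - (y2 - y1)*(m2 - ((x3 - c1) * (x3 - c1) + (y3 - c2) * (y3 - c2) - ((x1 - c1) * (x1 - c1) + (y1 - c2) * (y1 - c2)))))/2).
  - unfold A, m1, m2; field.
  - rewrite H1, H2, H3. field. }
assert (C2 : c2 * A = ((x2 - x1)*m2 - (x3 - x1)*m1)/2).
{ transitivity (((x2 - x1)*(m2 - ((x3 - c1) * (x3 - c1) + (y3 - c2) * (y3 - c2) - ((x1 - c1) * (x1 - c1) + (y1 - c2) * (y1 - c2))))
   - (x3 - x1)*(m1 - ((x2 - c1) * (x2 - c1) + (y2 - c2) * (y2 - c2) - ((x1 - c1) * (x1 - c1) + (y1 - c2) * (y1 - c2)))))/2).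
  - unfold A, m1, m2; field.
  - rewrite H1, H2, H3. field. }
assert (K : (d*A)^2 = (l1*l2*l3)^2).
{ transitivity (4*((x1 - c1)*(x1-c1) + (y1-c2)*(y1-c2))*A^2).
  { rewrite H1. field. }
  transitivity (4*((x1*A - c1*A)^2 + (y1*A - c2*A)^2)).
  { ring. }
  rewrite C1, C2. replace ((l1*l2*l3)^2) with ((l1*(l1*1))*(l2*(l2*1))*(l3*(l3*1))) by ring.
    rewrite E1, E2, E3. unfold A, m1, m2. field. }
assert (dA : d * A = l1*l2*l3).
{ apply Rsqr_inj; unfold Rsqr; try nra. apply Rmult_le_pos; [apply Rmult_le_pos|]; auto. }
rewrite <- dA. field. lra.
Qed.

Definition Dp (e1 f1 g1 e2 f2 g2 : R) (u a b : pt) := fst u * hq e1 f1 g1 a b + snd u * hq e2 f2 g2 a b.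
Definition K0f (h : R*R*R*R*R*R) (a2 : R) (e ep em : pt) :=
  let '(e1,f1,g1,e2,f2,g2) := h in
  let m := rot e in
  let D u a b := Dp e1 f1 g1 e2 f2 g2 u a b in
  let Sk := sq e in let Sm := sq em in let Sp := sq ep in
  let X := 3*Sk^2-(Sm-Sp)^2 in
  (a2*X*(D e e e - D m e m - D m m e)/24 + a2^2*(Sm-Sp)*(D e e m + D e m e - D m m m)/12
    - a2^3*D e m m/6 + (Sm-Sp)*(9*Sk^2-(Sm-Sp)^2)*D m e e/48)/Sk^3.
Definition Kkf (h : R*R*R*R*R*R) (e : pt) :=
  let '(e1,f1,g1,e2,f2,g2) := h in Dp e1 f1 g1 e2 f2 g2 (rot e) e e / 12.

Ltac K0_tac z1 z2 z3 Hf1 Hf2 Hd HA :=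
  unfold sum12;
  cbv beta iota zeta delta [alpha Dcal tn Dop Nat.eqb Nat.add etan enrm];
  rewrite !(dder2_P2 _ _ _ _ _ _ _ _ _ Hf1), !(dder2_P2 _ _ _ _ _ _ _ _ _ Hf2);
  rewrite Hd; clear Hd;
  unfold K0f; cbv beta iota zeta;
  rewrite <- ?(elen_sq1 z1 z2 z3), <- ?(elen_sq2 z1 z2 z3), <- ?(elen_sq3 z1 z2 z3);
  change (elen z1 z2 z3 4) with (elen z1 z2 z3 1); change (elen z1 z2 z3 5) with (elen z1 z2 z3 2);
  change (vtx z1 z2 z3 6) with z3;
  change (vtx z1 z2 z3 2) with z2; change (vtx z1 z2 z3 3) with z3;
  change (vtx z1 z2 z3 4) with z1; change (vtx z1 z2 z3 5) with z2;
  pose proof (elen_pos z1 z2 z3 1 HA ltac:(lia));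
  pose proof (elen_pos z1 z2 z3 2 HA ltac:(lia));
  pose proof (elen_pos z1 z2 z3 3 HA ltac:(lia));
  generalize dependent (elen z1 z2 z3 1); generalize dependent (elen z1 z2 z3 2);
  generalize dependent (elen z1 z2 z3 3);
  intros L3 P3 L2 P2 L1 P1;
  unfold etan, enrm, Dp, hq, rot, vscal, vsub; simpl;
  field; repeat split; try lra.

Lemma K0_1 z1 z2 z3 d p2 a1 b1 c1 e1 f1 g1 a2 b2 c2 e2 f2 g2 :
  0 < area2 z1 z2 z3 ->
  P2eq (fun x => fst (p2 x)) a1 b1 c1 e1 f1 g1 -> P2eq (fun x => snd (p2 x)) a2 b2 c2 e2 f2 g2 ->
  d = elen z1 z2 z3 1 * elen z1 z2 z3 2 * elen z1 z2 z3 3 / area2 z1 z2 z3 ->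
  sum12 (fun i => sum12 (fun j => sum12 (fun l => alpha z1 z2 z3 d i j l 1 * Dcal z1 z2 z3 i j l 1 p2)))
  = K0f (e1,f1,g1,e2,f2,g2) (area2 z1 z2 z3) (vsub z3 z2) (vsub z1 z3) (vsub z2 z1).
Proof.
intros HA Hf1 Hf2 Hd.
K0_tac z1 z2 z3 Hf1 Hf2 Hd HA.
Qed.

Lemma K0_2 z1 z2 z3 d p2 a1 b1 c1 e1 f1 g1 a2 b2 c2 e2 f2 g2 :
  0 < area2 z1 z2 z3 ->
  P2eq (fun x => fst (p2 x)) a1 b1 c1 e1 f1 g1 -> P2eq (fun x => snd (p2 x)) a2 b2 c2 e2 f2 g2 ->
  d = elen z1 z2 z3 1 * elen z1 z2 z3 2 * elen z1 z2 z3 3 / area2 z1 z2 z3 ->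
  sum12 (fun i => sum12 (fun j => sum12 (fun l => alpha z1 z2 z3 d i j l 2 * Dcal z1 z2 z3 i j l 2 p2)))
  = K0f (e1,f1,g1,e2,f2,g2) (area2 z1 z2 z3) (vsub z1 z3) (vsub z2 z1) (vsub z3 z2).
Proof.
intros HA Hf1 Hf2 Hd.
K0_tac z1 z2 z3 Hf1 Hf2 Hd HA.
Qed.

Lemma K0_3 z1 z2 z3 d p2 a1 b1 c1 e1 f1 g1 a2 b2 c2 e2 f2 g2 :
  0 < area2 z1 z2 z3 ->
  P2eq (fun x => fst (p2 x)) a1 b1 c1 e1 f1 g1 -> P2eq (fun x => snd (p2 x)) a2 b2 c2 e2 f2 g2 ->
  d = elen z1 z2 z3 1 * elen z1 z2 z3 2 * elen z1 z2 z3 3 / area2 z1 z2 z3 ->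
  sum12 (fun i => sum12 (fun j => sum12 (fun l => alpha z1 z2 z3 d i j l 3 * Dcal z1 z2 z3 i j l 3 p2)))
  = K0f (e1,f1,g1,e2,f2,g2) (area2 z1 z2 z3) (vsub z2 z1) (vsub z3 z2) (vsub z1 z3).
Proof.
intros HA Hf1 Hf2 Hd.
K0_tac z1 z2 z3 Hf1 Hf2 Hd HA.
Qed.

Lemma Kk_1 z1 z2 z3 p2 a1 b1 c1 e1 f1 g1 a2 b2 c2 e2 f2 g2 :
  0 < area2 z1 z2 z3 ->
  P2eq (fun x => fst (p2 x)) a1 b1 c1 e1 f1 g1 -> P2eq (fun x => snd (p2 x)) a2 b2 c2 e2 f2 g2 ->
  elen z1 z2 z3 1 ^ 3 / 12 * Dcal z1 z2 z3 2 1 1 1 p2 = Kkf (e1,f1,g1,e2,f2,g2) (vsub z3 z2).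
Proof.
intros HA Hf1 Hf2.
pose proof (elen_pos z1 z2 z3 1 HA ltac:(lia)).
cbv beta iota zeta delta [Dcal tn Dop Nat.eqb Nat.add etan enrm].
rewrite !(dder2_P2 _ _ _ _ _ _ _ _ _ Hf1), !(dder2_P2 _ _ _ _ _ _ _ _ _ Hf2).
change (vtx z1 z2 z3 2) with z2; change (vtx z1 z2 z3 3) with z3;
change (vtx z1 z2 z3 4) with z1; change (vtx z1 z2 z3 5) with z2.
generalize dependent (elen z1 z2 z3 1). intros L HL.
unfold Kkf, Dp, hq, rot, vscal, vsub; simpl. field. lra.
Qed.

Lemma Kk_2 z1 z2 z3 p2 a1 b1 c1 e1 f1 g1 a2 b2 c2 e2 f2 g2 :
  0 < area2 z1 z2 z3 ->
  P2eq (fun x => fst (p2 x)) a1 b1 c1 e1 f1 g1 -> P2eq (fun x => snd (p2 x)) a2 b2 c2 e2 f2 g2 ->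
  elen z1 z2 z3 2 ^ 3 / 12 * Dcal z1 z2 z3 2 1 1 2 p2 = Kkf (e1,f1,g1,e2,f2,g2) (vsub z1 z3).
Proof.
intros HA Hf1 Hf2.
pose proof (elen_pos z1 z2 z3 2 HA ltac:(lia)).
cbv beta iota zeta delta [Dcal tn Dop Nat.eqb Nat.add etan enrm].
rewrite !(dder2_P2 _ _ _ _ _ _ _ _ _ Hf1), !(dder2_P2 _ _ _ _ _ _ _ _ _ Hf2).
change (vtx z1 z2 z3 2) with z2; change (vtx z1 z2 z3 3) with z3;
change (vtx z1 z2 z3 4) with z1; change (vtx z1 z2 z3 5) with z2.
generalize dependent (elen z1 z2 z3 2). intros L HL.
unfold Kkf, Dp, hq, rot, vscal, vsub; simpl. field. lra.
Qed.

Lemma Kk_3 z1 z2 z3 p2 a1 b1 c1 e1 f1 g1 a2 b2 c2 e2 f2 g2 :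
  0 < area2 z1 z2 z3 ->
  P2eq (fun x => fst (p2 x)) a1 b1 c1 e1 f1 g1 -> P2eq (fun x => snd (p2 x)) a2 b2 c2 e2 f2 g2 ->
  elen z1 z2 z3 3 ^ 3 / 12 * Dcal z1 z2 z3 2 1 1 3 p2 = Kkf (e1,f1,g1,e2,f2,g2) (vsub z2 z1).
Proof.
intros HA Hf1 Hf2.
pose proof (elen_pos z1 z2 z3 3 HA ltac:(lia)).
cbv beta iota zeta delta [Dcal tn Dop Nat.eqb Nat.add etan enrm].
rewrite !(dder2_P2 _ _ _ _ _ _ _ _ _ Hf1), !(dder2_P2 _ _ _ _ _ _ _ _ _ Hf2).
change (vtx z1 z2 z3 2) with z2; change (vtx z1 z2 z3 3) with z3;
change (vtx z1 z2 z3 4) with z1; change (vtx z1 z2 z3 5) with z2.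
generalize dependent (elen z1 z2 z3 3). intros L HL.
unfold Kkf, Dp, hq, rot, vscal, vsub; simpl. field. lra.
Qed.

Ltac lemB_tac :=
  match goal with |- context [Gfun _ _ _ _ _ _ _ _ _ _ ?x] => destruct x as [X Y] end;
  unfold area2, cross, vsub, sq in *; simpl in *;
  unfold Gfun, aff, glam, K0f, Kkf, Dp, hq, rot, sq; simpl;
  f_equal; field; auto.

Section LB.
Variables (p1 q1 p2 q2 p3 q3 : R) (e1 f1 g1 e2 f2 g2 : R) (x : pt).
Let z1 := (p1, q1). Let z2 := (p2, q2). Let z3 := (p3, q3).
Let h := (e1,f1,g1,e2,f2,g2).
Let a2 := area2 z1 z2 z3.
Let c1 := (2*e1+f2)/3. Let c2 := (f1+2*g2)/3.
Let G0 K0 := Gfun 0 0 0 (glam z2 z3 a2) (glam z3 z1 a2) (glam z1 z2 a2)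
    K0 (Kkf h (vsub z3 z2)) (Kkf h (vsub z1 z3)) (Kkf h (vsub z2 z1)) x.
Let RHS := (e1*fst x^2 + f1*fst x*snd x + g1*snd x^2 - (c1*fst x+c2*snd x)*fst x,
     e2*fst x^2 + f2*fst x*snd x + g2*snd x^2 - (c1*fst x+c2*snd x)*snd x).
Lemma lemB1 : a2 <> 0 -> sq (vsub z3 z2) <> 0 ->
  G0 (K0f h a2 (vsub z3 z2) (vsub z1 z3) (vsub z2 z1)) = RHS.
Proof. unfold G0, RHS, c1, c2, h, a2, z1, z2, z3. intros Ha Hs. lemB_tac. Qed.
Lemma lemB2 : a2 <> 0 -> sq (vsub z1 z3) <> 0 ->
  G0 (K0f h a2 (vsub z1 z3) (vsub z2 z1) (vsub z3 z2)) = RHS.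
Proof. unfold G0, RHS, c1, c2, h, a2, z1, z2, z3. intros Ha Hs. lemB_tac. Qed.
Lemma lemB3 : a2 <> 0 -> sq (vsub z2 z1) <> 0 ->
  G0 (K0f h a2 (vsub z2 z1) (vsub z3 z2) (vsub z1 z3)) = RHS.
Proof. unfold G0, RHS, c1, c2, h, a2, z1, z2, z3. intros Ha Hs. lemB_tac. Qed.
End LB.

Definition Gact z1 z2 z3 K0 K1 K2 K3 := Gfun (cross z2 z3 / area2 z1 z2 z3) (cross z3 z1 / area2 z1 z2 z3)
  (cross z1 z2 / area2 z1 z2 z3) (glam z2 z3 (area2 z1 z2 z3)) (glam z3 z1 (area2 z1 z2 z3))
  (glam z1 z2 (area2 z1 z2 z3)) K0 K1 K2 K3.

Lemma Gdof_edge z1 z2 z3 K0 K1 K2 K3 k : 0 < area2 z1 z2 z3 -> (1 <= k <= 3)%nat ->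
  forall v, is_P1 v ->
  simp (vtx z1 z2 z3 (k+1)) (vtx z1 z2 z3 (k+2))
    (fun x => dot (Gact z1 z2 z3 K0 K1 K2 K3 x) (enrm z1 z2 z3 k) * v x) = 0.
Proof.
intros HA Hk v [a [b [c Hv]]].
pose proof (elen_pos z1 z2 z3 k HA Hk) as HL.
unfold simp. rewrite !Hv.
unfold enrm, etan.
generalize dependent (elen z1 z2 z3 k). intros L HL.
assert (Hk3 : (k = 1 \/ k = 2 \/ k = 3)%nat) by lia; destruct Hk3 as [ -> | [ -> | -> ]];
change (vtx z1 z2 z3 (1+1)) with z2; change (vtx z1 z2 z3 (1+2)) with z3;
change (vtx z1 z2 z3 (2+1)) with z3; change (vtx z1 z2 z3 (2+2)) with z1;
change (vtx z1 z2 z3 (3+1)) with z1; change (vtx z1 z2 z3 (3+2)) with z2;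
unfold area2 in *;
destruct z1 as [x1 y1], z2 as [x2 y2], z3 as [x3 y3];
unfold Gact, area2, Gfun, aff, glam, seg, dot, cross, vsub, vadd, vscal in *; simpl in *;
field; split; lra.
Qed.

Lemma Gdof_tri z1 z2 z3 K0 K1 K2 K3 : 0 < area2 z1 z2 z3 ->
  midsum z1 z2 z3 (fun x => fst (Gact z1 z2 z3 K0 K1 K2 K3 x)) = 0 /\
  midsum z1 z2 z3 (fun x => snd (Gact z1 z2 z3 K0 K1 K2 K3 x)) = 0.
Proof.
intros HA. unfold area2 in *.
destruct z1 as [x1 y1], z2 as [x2 y2], z3 as [x3 y3];
unfold midsum, tp, Gact, area2, Gfun, aff, glam, seg, dot, cross, vsub, vadd, vscal in *; simpl in *.
split; field; lra.
Qed.

Definition Dlt l1 l2 l3 g1 g2 g3 K0 K1 K2 K3 y :=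
  vsub (Gfun l1 l2 l3 g1 g2 g3 K0 K1 K2 K3 y) (Gfun 0 0 0 g1 g2 g3 K0 K1 K2 K3 y).

Lemma LemA l1 l2 l3 g1 g2 g3 K0 K1 K2 K3 x :
  let D := Dlt l1 l2 l3 g1 g2 g3 K0 K1 K2 K3 in
  D x = (fst (D (0,0)) + fst x * (fst (D (1,0)) - fst (D (0,0))) + snd x * (fst (D (0,1)) - fst (D (0,0))),
         snd (D (0,0)) + fst x * (snd (D (1,0)) - snd (D (0,0))) + snd x * (snd (D (0,1)) - snd (D (0,0)))).
Proof.
intros D. unfold D, Dlt, Gfun, aff, vsub. destruct x as [X Y]; simpl. f_equal; ring.
Qed.

Lemma P2_Gfun l1 l2 l3 g1 g2 g3 K0 K1 K2 K3 :
  is_P2 (fun x => fst (Gfun l1 l2 l3 g1 g2 g3 K0 K1 K2 K3 x)) /\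
  is_P2 (fun x => snd (Gfun l1 l2 l3 g1 g2 g3 K0 K1 K2 K3 x)).
Proof.
split;
[set (F := fun x => fst (Gfun l1 l2 l3 g1 g2 g3 K0 K1 K2 K3 x)) |
 set (F := fun x => snd (Gfun l1 l2 l3 g1 g2 g3 K0 K1 K2 K3 x))];
exists (F (0,0)), ((F (1,0) - F (-1,0))/2), ((F (0,1) - F (0,-1))/2),
  ((F (1,0) + F (-1,0))/2 - F (0,0)), (F (1,1) - F (1,0) - F (0,1) + F (0,0)),
  ((F (0,1) + F (0,-1))/2 - F (0,0));
intros [X Y]; unfold F, Gfun, aff; simpl; field.
Qed.

Lemma r_rt r : in_RT1 r -> exists a1 b1 c1 a2 b2 c2 k1 k2, forall x, r x = rtform a1 b1 c1 a2 b2 c2 k1 k2 x.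
Proof.
intros [v1 [v2 [v3 [[a [b [c H1]]] [[a' [b' [c' H2]]] [[a'' [b'' [c'' H3]]] Hr]]]]]].
exists a, (b + a''), c, a', b', (c' + a''), b'', c''.
intros x. rewrite Hr, H1, H2, H3. unfold rtform. f_equal; ring.
Qed.

Lemma is_P2_ext f g : (forall x, f x = g x) -> is_P2 g -> is_P2 f.
Proof.
intros H [a [b [c [e [f' [g' Hg]]]]]]. exists a, b, c, e, f', g'. intros x. rewrite H. apply Hg.
Qed.

Lemma P2_lin f g a b : is_P2 f -> is_P2 g -> is_P2 (fun x => a * f x + b * g x).
Proof.
intros [a1 [b1 [c1 [e1 [f1 [g1 H1]]]]]] [a2 [b2 [c2 [e2 [f2 [g2 H2]]]]]].
exists (a*a1+b*a2), (a*b1+b*b2), (a*c1+b*c2), (a*e1+b*e2), (a*f1+b*f2), (a*g1+b*g2).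
intros x. rewrite H1, H2. ring.
Qed.

Lemma P2_diff (p r : pt -> pt) a1 b1 c1 e1 f1 g1 a2 b2 c2 e2 f2 g2 α1 β1 γ1 α2 β2 γ2 k1 k2 :
  P2eq (fun x => fst (p x)) a1 b1 c1 e1 f1 g1 -> P2eq (fun x => snd (p x)) a2 b2 c2 e2 f2 g2 ->
  (forall x, r x = rtform α1 β1 γ1 α2 β2 γ2 k1 k2 x) ->
  is_P2 (fun x => fst (p x) - fst (r x)) /\ is_P2 (fun x => snd (p x) - snd (r x)).
Proof.
intros H1 H2 Hr. split.
- exists (a1 - α1), (b1 - β1), (c1 - γ1), (e1 - k1), (f1 - k2), g1.
  intros x. rewrite Hr. rewrite (H1 x). unfold rtform; simpl. ring.
- exists (a2 - α2), (b2 - β2), (c2 - γ2), e2, (f2 - k1), (g2 - k2).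
  intros x. rewrite Hr. rewrite (H2 x). unfold rtform; simpl. ring.
Qed.

Lemma simp_sub A B F G1 G2 : (forall y, F y = G1 y - G2 y) -> simp A B F = simp A B G1 - simp A B G2.
Proof. intros H. unfold simp. rewrite !H. ring. Qed.
Lemma midsum_sub z1 z2 z3 F G1 G2 : (forall y, F y = G1 y - G2 y) ->
  midsum z1 z2 z3 F = midsum z1 z2 z3 G1 - midsum z1 z2 z3 G2.
Proof. intros H. unfold midsum. rewrite !H. ring. Qed.

Lemma tail z1 z2 z3 p2 r K0 K1 K2 K3 a1 b1 c1 e1 f1 g1 a2 b2 c2 e2 f2 g2 ρ1 ρ2 ρ3 ρ4 ρ5 ρ6 ρ7 ρ8 :
  0 < area2 z1 z2 z3 ->
  P2eq (fun x => fst (p2 x)) a1 b1 c1 e1 f1 g1 -> P2eq (fun x => snd (p2 x)) a2 b2 c2 e2 f2 g2 ->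
  (forall k : nat, (1 <= k <= 3)%nat -> forall v : pt -> R, is_P1 v ->
     edge_int z1 z2 z3 k (fun x => dot (vsub (p2 x) (r x)) (enrm z1 z2 z3 k) * v x) = 0) ->
  tri_int z1 z2 z3 (fun x => fst (p2 x) - fst (r x)) = 0 ->
  tri_int z1 z2 z3 (fun x => snd (p2 x) - snd (r x)) = 0 ->
  (forall y, r y = rtform ρ1 ρ2 ρ3 ρ4 ρ5 ρ6 ρ7 ρ8 y) ->
  (forall y, Gfun 0 0 0 (glam z2 z3 (area2 z1 z2 z3)) (glam z3 z1 (area2 z1 z2 z3))
      (glam z1 z2 (area2 z1 z2 z3)) K0 K1 K2 K3 y =
     (e1*fst y^2 + f1*fst y*snd y + g1*snd y^2 - ((2*e1+f2)/3*fst y+(f1+2*g2)/3*snd y)*fst y,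
      e2*fst y^2 + f2*fst y*snd y + g2*snd y^2 - ((2*e1+f2)/3*fst y+(f1+2*g2)/3*snd y)*snd y)) ->
  forall x, vsub (p2 x) (r x) = Gact z1 z2 z3 K0 K1 K2 K3 x.
Proof.
intros HA H1 H2 Hedge Ht1 Ht2 Hrr HG0 x.
set (k1 := (2*e1+f2)/3) in *. set (k2 := (f1+2*g2)/3) in *.
set (D := Dlt (cross z2 z3 / area2 z1 z2 z3) (cross z3 z1 / area2 z1 z2 z3)
  (cross z1 z2 / area2 z1 z2 z3) (glam z2 z3 (area2 z1 z2 z3)) (glam z3 z1 (area2 z1 z2 z3))
  (glam z1 z2 (area2 z1 z2 z3)) K0 K1 K2 K3).
assert (HpG : forall y, vsub (p2 y) (Gact z1 z2 z3 K0 K1 K2 K3 y) =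
  rtform (a1 - fst (D (0,0))) (b1 - (fst (D (1,0)) - fst (D (0,0)))) (c1 - (fst (D (0,1)) - fst (D (0,0))))
         (a2 - snd (D (0,0))) (b2 - (snd (D (1,0)) - snd (D (0,0)))) (c2 - (snd (D (0,1)) - snd (D (0,0))))
         k1 k2 y).
{ intros y.
  assert (E : Gact z1 z2 z3 K0 K1 K2 K3 y = vadd (Gfun 0 0 0 (glam z2 z3 (area2 z1 z2 z3)) (glam z3 z1 (area2 z1 z2 z3))
      (glam z1 z2 (area2 z1 z2 z3)) K0 K1 K2 K3 y) (D y)).
  { unfold D, Dlt, vadd, vsub, Gact. simpl. apply injective_projections; simpl; ring. }
  rewrite E, HG0. unfold D; rewrite LemA; fold D.
  pose proof (H1 y) as E1. pose proof (H2 y) as E2. cbv beta in E1, E2.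
  generalize (D (0,0)) (D (1,0)) (D (0,1)). intros d0 d1 d2.
  unfold vsub, vadd, rtform. simpl. rewrite E1, E2. apply injective_projections; simpl; unfold k1, k2; field. }
set (q := fun y => vsub (r y) (vsub (p2 y) (Gact z1 z2 z3 K0 K1 K2 K3 y))).
assert (Hq : forall y, q y = rtform (ρ1 - (a1 - fst (D (0,0)))) (ρ2 - (b1 - (fst (D (1,0)) - fst (D (0,0)))))
   (ρ3 - (c1 - (fst (D (0,1)) - fst (D (0,0))))) (ρ4 - (a2 - snd (D (0,0))))
   (ρ5 - (b2 - (snd (D (1,0)) - snd (D (0,0))))) (ρ6 - (c2 - (snd (D (0,1)) - snd (D (0,0)))))
   (ρ7 - k1) (ρ8 - k2) y).
{ intros y. unfold q. rewrite HpG, Hrr. unfold rtform, vsub. simpl. apply injective_projections; simpl; ring. }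
destruct (P2_diff p2 r _ _ _ _ _ _ _ _ _ _ _ _ _ _ _ _ _ _ _ _ H1 H2 Hrr) as [P1d P2d].
assert (Z : q x = (0,0)).
{ apply (unisolve z1 z2 z3 q _ _ _ _ _ _ _ _ HA Hq).
  - intros k Hk v Hv.
    rewrite (simp_sub _ _ _ (fun y => dot (Gact z1 z2 z3 K0 K1 K2 K3 y) (enrm z1 z2 z3 k) * v y)
       (fun y => dot (vsub (p2 y) (r y)) (enrm z1 z2 z3 k) * v y)).
    + rewrite Gdof_edge by auto.
      assert (HP : is_P2 (fun y => dot (vsub (p2 y) (r y)) (enrm z1 z2 z3 k))).
      { apply (is_P2_ext _ (fun y => fst (enrm z1 z2 z3 k) * (fst (p2 y) - fst (r y))
                 + snd (enrm z1 z2 z3 k) * (snd (p2 y) - snd (r y)))).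
        - intros y; unfold dot, vsub; simpl; ring.
        - apply P2_lin; auto. }
      pose proof (edge_quad z1 z2 z3 k _ v HP Hv) as E. cbv beta in E.
      pose proof (Hedge k Hk v Hv) as E'. rewrite E in E'.
      pose proof (elen_pos z1 z2 z3 k HA Hk).
      assert (S0 : simp (vtx z1 z2 z3 (k + 1)) (vtx z1 z2 z3 (k + 2))
         (fun x => dot (vsub (p2 x) (r x)) (enrm z1 z2 z3 k) * v x) = 0).
      { destruct (Rmult_integral _ _ (eq_trans (eq_sym (Rmult_assoc _ _ _)) E')) as [Z|Z]; [lra|].
        apply Rmult_integral in Z; destruct Z as [Z|Z]; [auto|]. exfalso; revert Z; apply Rinv_neq_0_compat; lra. }
      rewrite S0; ring.
    + intros y; unfold q, dot, vsub; simpl; ring.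
  - rewrite (midsum_sub _ _ _ _ (fun y => fst (Gact z1 z2 z3 K0 K1 K2 K3 y)) (fun y => fst (p2 y) - fst (r y))).
    + destruct (Gdof_tri z1 z2 z3 K0 K1 K2 K3 HA) as [G1 _]. rewrite G1.
      rewrite (tri_quad _ _ _ _ P1d) in Ht1.
      assert (midsum z1 z2 z3 (fun y => fst (p2 y) - fst (r y)) = 0) as ->.
      { apply Rmult_integral in Ht1. destruct Ht1 as [Z|Z].
        - apply Rmult_integral in Z; destruct Z as [Z|Z]; [lra | auto].
        - exfalso; revert Z; apply Rinv_neq_0_compat; lra. }
      ring.
    + intros y; unfold q, vsub; simpl; ring.
  - rewrite (midsum_sub _ _ _ _ (fun y => snd (Gact z1 z2 z3 K0 K1 K2 K3 y)) (fun y => snd (p2 y) - snd (r y))).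
    + destruct (Gdof_tri z1 z2 z3 K0 K1 K2 K3 HA) as [_ G2]. rewrite G2.
      rewrite (tri_quad _ _ _ _ P2d) in Ht2.
      assert (midsum z1 z2 z3 (fun y => snd (p2 y) - snd (r y)) = 0) as ->.
      { apply Rmult_integral in Ht2. destruct Ht2 as [Z|Z].
        - apply Rmult_integral in Z; destruct Z as [Z|Z]; [lra | auto].
        - exfalso; revert Z; apply Rinv_neq_0_compat; lra. }
      ring.
    + intros y; unfold q, vsub; simpl; ring. }
unfold q in Z. unfold vsub in *.
pose proof (f_equal fst Z) as Z1. pose proof (f_equal snd Z) as Z2. simpl in Z1, Z2.
apply injective_projections; simpl; lra.
Qed.

Lemma sq_sym a b : sq (vsub a b) = sq (vsub b a).
Proof. unfold sq, vsub; simpl; ring. Qed.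

Theorem lemma5p1 (z1 z2 z3 : pt) (Hccw : 0 < area2 z1 z2 z3)
  (d : R)
  (Hd : exists c : pt, forall k : nat, (1 <= k <= 3)%nat ->
          vnorm (vsub (vtx z1 z2 z3 k) c) = d / 2)
  (p2 : pt -> pt) (Hp2 : is_P2vec p2)
  (r : pt -> pt) (Hr : is_Pi1 z1 z2 z3 p2 r) :
  forall beta : nat, (1 <= beta <= 3)%nat ->
  forall x : pt, in_tri z1 z2 z3 x ->
    vsub (p2 x) (r x) = gradperp (wfun z1 z2 z3 d p2 beta) x.
Proof.
intros beta Hb x _.
pose proof Hccw as HA. assert (HA0 : area2 z1 z2 z3 <> 0) by lra.
destruct Hp2 as [[a1 [b1 [c1 [e1 [f1 [g1 Hf1]]]]]] [a2 [b2 [c2 [e2 [f2 [g2 Hf2]]]]]]].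
assert (P1 : P2eq (fun x => fst (p2 x)) a1 b1 c1 e1 f1 g1) by exact Hf1.
assert (P2' : P2eq (fun x => snd (p2 x)) a2 b2 c2 e2 f2 g2) by exact Hf2.
pose proof (d_eq z1 z2 z3 d HA Hd) as Hdd.
destruct Hr as [HrRT [Hedge [Ht1 Ht2]]].
destruct (r_rt r HrRT) as [ρ1 [ρ2 [ρ3 [ρ4 [ρ5 [ρ6 [ρ7 [ρ8 Hrr]]]]]]]].
rewrite (gradperp_ext _ _ x (wfun_Wg z1 z2 z3 d p2 beta HA0)), gradperp_Wg.
rewrite (Kk_1 _ _ _ _ _ _ _ _ _ _ _ _ _ _ _ _ HA P1 P2'), (Kk_2 _ _ _ _ _ _ _ _ _ _ _ _ _ _ _ _ HA P1 P2'),
  (Kk_3 _ _ _ _ _ _ _ _ _ _ _ _ _ _ _ _ HA P1 P2').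
destruct (edges_pos _ _ _ HA) as [S1 [S2 S3]].
assert (Hb3 : (beta = 1 \/ beta = 2 \/ beta = 3)%nat) by lia.
destruct Hb3 as [ -> | [ -> | -> ]].
- rewrite (K0_1 _ _ _ _ _ _ _ _ _ _ _ _ _ _ _ _ _ HA P1 P2' Hdd).
  apply (tail z1 z2 z3 p2 r _ _ _ _ _ _ _ _ _ _ _ _ _ _ _ _ _ _ _ _ _ _ _ _ HA P1 P2' Hedge Ht1 Ht2 Hrr).
  intros y. rewrite sq_sym in S1. destruct z1, z2, z3. apply lemB1; lra.
- rewrite (K0_2 _ _ _ _ _ _ _ _ _ _ _ _ _ _ _ _ _ HA P1 P2' Hdd).
  apply (tail z1 z2 z3 p2 r _ _ _ _ _ _ _ _ _ _ _ _ _ _ _ _ _ _ _ _ _ _ _ _ HA P1 P2' Hedge Ht1 Ht2 Hrr).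
  intros y. rewrite sq_sym in S2. destruct z1, z2, z3. apply lemB2; lra.
- rewrite (K0_3 _ _ _ _ _ _ _ _ _ _ _ _ _ _ _ _ _ HA P1 P2' Hdd).
  apply (tail z1 z2 z3 p2 r _ _ _ _ _ _ _ _ _ _ _ _ _ _ _ _ _ _ _ _ _ _ _ _ HA P1 P2' Hedge Ht1 Ht2 Hrr).
  intros y. rewrite sq_sym in S3. destruct z1, z2, z3. apply lemB3; lra.
Qed.
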